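(* Let $n,\ell$ be positive integers with $\ell\mid n$, and let $p_0,\dots,p_{n/\ell-1}\in(0,1)$. Let $T$ be the runtime of the (1+1) EA on $\mathrm{BLO}_\ell$ using mutation rate $p_m$ whenever the current individual has fitness $m$. Then \[ \mathbb{E}[T]=\sum_{m=0}^{n/\ell-1}\frac{1}{(1-p_m)^{m\ell}}\sum_{j=1}^{\ell}\binom{\ell}{j}\frac{1}{1-(1-2p_m)^j}. \] In particular, for a static mutation rate $p\in(0,1)$ (i.e. $p_m=p$ for all $m$), \[ \mathbb{E}[T]=\frac{(1-p)^{-n+\ell}-(1-p)^{\ell}}{1-(1-p)^{\ell}}\sum_{j=1}^{\ell}\binom{\ell}{j}\frac{1}{1-(1-2p)^j}. \]
   Context: For positive integers $n,\ell$ with $\ell\mid n$, the BlockLeadingOnes function $\mathrm{BLO}_\ell:\{0,1\}^n\to\{0,\dots,n/\ell\}$ is $\mathrm{BLO}_\ell(x)=\sum_{m=1}^{n/\ell}\prod_{i=1}^{m\ell}x_i$, i.e. the number of leading blocks of $\ell$ consecutive bits that consist only of ones (equivalently $\lfloor \mathrm{LO}(x)/\ell\rfloor$ where $\mathrm{LO}(x)$ is the number of leading ones of $x$). The (1+1) EA: $x_0$ is uniform on $\{0,1\}^n$; in iteration $t=1,2,\dots$ an offspring $y$ is obtained from $x_{t-1}$ by flipping each bit independently with probability $q_t$, where $q_t=p_{\mathrm{BLO}_\ell(x_{t-1})}$ (fitness-dependent rate), and $x_t=y$ if $\mathrm{BLO}_\ell(y)\ge \mathrm{BLO}_\ell(x_{t-1})$,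 otherwise $x_t=x_{t-1}$. The runtime is $T=\min\{t\ge0:\mathrm{BLO}_\ell(x_t)=n/\ell\}$. *)

(* Defs.v *)
From HB Require Import structures.
From mathcomp Require Import all_boot all_order all_algebra.
From mathcomp Require Import reals ereal sequences.
Set Implicit Arguments. Unset Strict Implicit. Unset Printing Implicit Defensive.
Import Order.TTheory GRing.Theory Num.Theory.

Definition bits (n : nat) := {ffun 'I_n -> bool}.

(* BLO_l(x) = sum_{m=1}^{n/l} prod_{i=1}^{m l} x_i  (0-based indices here). *)
Definition BLO (n l : nat) (x : bits n) : nat :=
  (\sum_(1 <= m < (n %/ l).+1) [forall i : 'I_n, (i < m * l)%N ==> x i])%N.

Definition is_opt (n l : nat) (x : bits n) : bool := BLO l x == n %/ l.

Local Open Scope ring_scope.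

Section EA.
Variables (R : realType) (n l : nat) (p : nat -> R).

Definition mutprob (q : R) (x y : bits n) : R :=
  \prod_(i < n) (if x i == y i then 1 - q else q).

Definition ea_step (x z : bits n) : R :=
  \sum_(y : bits n) mutprob (p (BLO l x)) x y *
     ((if (BLO l x <= BLO l y)%N then y else x) == z)%:R.

(* alive t z = P(x_t = z and T > t), i.e. x_0,...,x_t all non-optimal *)
Fixpoint alive (t : nat) (z : bits n) : R :=
  if is_opt l z then 0 else
  match t with
  | 0 => (2 ^+ n)^-1
  | t'.+1 => \sum_(x : bits n) alive t' x * ea_step x z
  end.

Definition surv (t : nat) : R := \sum_(x : bits n) alive t x.

(* E[T] = sum_{t >= 0} P(T > t), in the extended reals *)
Definition expected_runtime : \bar R := (\sum_(t <oo) (surv t)%:E)%E.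
End EA.

(* Main.v *)
Require Import Defs.
From HB Require Import structures.
From mathcomp Require Import all_boot all_order all_algebra.
From mathcomp Require Import reals ereal sequences.
From mathcomp Require Import ring lra zify.
Set Implicit Arguments. Unset Strict Implicit. Unset Printing Implicit Defensive.
Import Order.TTheory GRing.Theory Num.Theory.
Local Open Scope ring_scope.

Section Comb.
Variables (n l : nat).
Hypotheses (n_gt0 : (0 < n)%N) (l_gt0 : (0 < l)%N) (ldn : (l %| n)%N).
Local Notation k := (n %/ l)%N.

Lemma nkl : n = (k * l)%N. Proof. by rewrite divnK. Qed.

Definition pi (a : nat) (x : bits n) : bool :=
  [forall i : 'I_n, (i < a * l)%N ==> x i].
Local Notation L x := (@BLO n l x).

Lemma pi_anti a b x : (a <= b)%N -> pi b x -> pi a x.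
Proof.
move=> ab /forallP H; apply/forallP => i; apply/implyP => ia.
by apply: (implyP (H i)); apply: leq_trans ia _; rewrite leq_mul2r ab orbT.
Qed.

Lemma pi0 x : pi 0 x.
Proof. by apply/forallP => i; rewrite mul0n ltn0. Qed.

Lemma L_le_k x : (L x <= k)%N.
Proof.
rewrite /BLO; apply: (@leq_trans (\sum_(1 <= m < k.+1) 1)%N).
  by apply: leq_sum => m _; exact: leq_b1.
by rewrite sum_nat_const_nat muln1 subn1.
Qed.

Lemma leL a x : (a <= k)%N -> (a <= L x)%N = pi a x.
Proof.
case: a => [|a] ak; first by rewrite leq0n pi0.
rewrite /BLO.
case Hp: (pi a.+1 x).
  have H m : (m <= a.+1)%N -> [forall i : 'I_n, (i < m * l)%N ==> x i].
    by move=> ma; exact: (pi_anti ma Hp).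
  rewrite (big_cat_nat _ (n:=a.+2)) //=.
  rewrite (eq_big_nat _ _ (F2 := fun _ => 1%N)); last first.
    by move=> m /andP[_ ma]; rewrite H.
  by rewrite sum_nat_const_nat muln1 subn1 leq_addr.
have H m : (a.+1 <= m)%N -> [forall i : 'I_n, (i < m * l)%N ==> x i] = false.
  by move=> am; apply/negbTE/negP => Hm; move: (pi_anti am Hm); rewrite Hp.
rewrite (big_cat_nat _ (n:=a.+1)) //=; last by rewrite ltnS ltnW.
have Z : (\sum_(a.+1 <= m < k.+1) [forall i : 'I_n, (i < m * l)%N ==> x i] = 0)%N.
  by rewrite big_nat_cond big1 // => m /andP[/andP[am _] _]; rewrite H.
rewrite Z addn0.
apply/negbTE; rewrite -ltnNge ltnS.
apply: (@leq_trans (\sum_(1 <= m < a.+1) 1)%N).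
  by apply: leq_sum => m _; exact: leq_b1.
by rewrite sum_nat_const_nat muln1 subn1.
Qed.

Lemma opt_pi x : is_opt l x = pi k x.
Proof. by rewrite /is_opt eqn_leq L_le_k -leL. Qed.

Lemma pi_k_all x : pi k x -> forall i, x i.
Proof. by move=> /forallP H i; apply: (implyP (H i)); rewrite -nkl ltn_ord. Qed.

Definition flip (i0 : 'I_n) (x : bits n) : bits n :=
  [ffun i => if i == i0 then ~~ x i else x i].

Lemma flipK i0 : involutive (flip i0).
Proof.
by move=> x; apply/ffunP => i; rewrite !ffunE; case: (i == i0) => //; rewrite negbK.
Qed.

Lemma flip_inj i0 : injective (flip i0).
Proof. exact: inv_inj (flipK i0). Qed.

Lemma pi_flip a (i0 : 'I_n) (x : bits n) : (a * l <= i0)%N -> pi a (flip i0 x) = pi a x.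
Proof.
move=> ai; apply: eq_forallb => i; rewrite ffunE.
case: eqP => // ->; by rewrite ltnNge ai.
Qed.

Lemma leL_flip a (i0 : 'I_n) (x : bits n) : (a <= k)%N -> (a * l <= i0)%N ->
  (a <= L (flip i0 x))%N = (a <= L x)%N.
Proof. by move=> ak ai; rewrite !leL // pi_flip. Qed.

Lemma L_flip (i0 : 'I_n) (x : bits n) : ((L x).+1 * l <= i0)%N -> L (flip i0 x) = L x.
Proof.
move=> Hi.
have Lk : (L x < k)%N.
  rewrite ltnNge; apply/negP => kL.
  have : ((L x).+1 * l <= k * l)%N by rewrite -nkl; exact: leq_trans Hi (ltnW (ltn_ord i0)).
  by rewrite leq_mul2r ltnNge kL orbF; case: l l_gt0.
have H2 : (L x * l <= i0)%N.
  by apply: leq_trans Hi; rewrite leq_mul2r leqnSn orbT.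
apply/eqP; rewrite eqn_leq; apply/andP; split.
  by rewrite leqNgt (leL_flip _ Lk Hi) ltnn.
by rewrite (leL_flip _ (ltnW Lk) H2).
Qed.


Variable R : realType.
Variable p : nat -> R.
Hypothesis p01 : forall m, (m < k)%N -> 0 < p m < 1.

Local Notation mut := (@mutprob R n).
Local Notation ea := (@ea_step R n l p).
Local Notation alive := (@alive R n l p).

Definition wt (q : R) (a b : bool) : R := if a == b then 1 - q else q.

Lemma E_prod (q : R) (x : bits n) (F : 'I_n -> bool -> R) :
  \sum_(y : bits n) mut q x y * \prod_(i < n) F i (y i) =
  \prod_(i < n) (wt q (x i) true * F i true + wt q (x i) false * F i false).
Proof.
transitivity (\sum_(y : bits n) \prod_(i < n) (wt q (x i) (y i) * F i (y i))).
  by apply: eq_bigr => y _; rewrite /mutprob -big_split.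
symmetry.
rewrite (eq_bigr (fun i => \sum_(b : bool) wt q (x i) b * F i b)); last first.
  by move=> i _; rewrite big_bool.
by rewrite bigA_distr_bigA.
Qed.

Lemma mut_flip q i0 x y : mut q (flip i0 x) (flip i0 y) = mut q x y.
Proof.
rewrite /mutprob; apply: eq_bigr => i _; rewrite !ffunE.
by case: (i == i0) => //; rewrite (inj_eq negb_inj).
Qed.

Lemma mut_sum1 q x : \sum_(y : bits n) mut q x y = 1.
Proof.
transitivity (\sum_(y : bits n) mut q x y * \prod_(i < n) (fun _ _ => (1:R)) i (y i)).
  by apply: eq_bigr => y _; rewrite big1 ?mulr1.
rewrite (E_prod q x (fun _ _ => 1)) big1 // => i _; rewrite /wt !mulr1.
by case: (x i) => /=; lra.
Qed.

Lemma mut_ge0 q x y : 0 <= q <= 1 -> 0 <= mut q x y.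
Proof.
move=> /andP[q0 q1]; apply: prodr_ge0 => i _; case: eqP => _ //; lra.
Qed.

Lemma nopt_lt (x : bits n) : ~~ is_opt l x -> (L x < k)%N.
Proof. by rewrite /is_opt ltn_neqAle L_le_k andbT. Qed.

Lemma ea0 (x z : bits n) : (L z < L x)%N -> ea x z = 0.
Proof.
move=> Hz; rewrite /ea_step big1 // => y _.
have [xy|yx] := leqP (L x) (L y).
  case: eqP => [ey|_]; last by rewrite mulr0.
  by rewrite ey leqNgt Hz in xy.
case: eqP => [ex|_]; last by rewrite mulr0.
by rewrite ex ltnn in Hz.
Qed.

Lemma ea_ge0 (x z : bits n) : (L x < k)%N -> 0 <= ea x z.
Proof.
move=> Hx; apply: sumr_ge0 => y _; apply: mulr_ge0; last exact: ler0n.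
by apply: mut_ge0; case/andP: (p01 Hx) => h1 h2; apply/andP; split; lra.
Qed.

Lemma ea_flip (i0 : 'I_n) (x z : bits n) : ((L x).+1 * l <= i0)%N ->
  ea (flip i0 x) (flip i0 z) = ea x z.
Proof.
move=> Hi.
have Hx : (L x * l <= i0)%N by apply: leq_trans Hi; rewrite leq_mul2r leqnSn orbT.
rewrite /ea_step (L_flip Hi) (reindex_inj (flip_inj (i0:=i0))); apply: eq_bigr => y _.
rewrite mut_flip (leL_flip _ (L_le_k x) Hx).
by rewrite -(fun_if (flip i0)) (inj_eq (flip_inj (i0:=i0))).
Qed.

Lemma alive_opt t (z : bits n) : is_opt l z -> alive t z = 0.
Proof. by case: t => [|t] /= ->. Qed.

Lemma alive_ge0 t (z : bits n) : 0 <= alive t z.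
Proof.
elim: t z => [|t IH] z /=.
  by case: (is_opt l z) => //; rewrite invr_ge0 exprn_ge0.
case: (is_opt l z) => //; apply: sumr_ge0 => x _.
case Ox: (is_opt l x); first by rewrite alive_opt // mul0r.
by apply: mulr_ge0 => //; apply: ea_ge0; apply: nopt_lt; rewrite Ox.
Qed.

Lemma alive_flip t (z : bits n) (i0 : 'I_n) : ((L z).+1 * l <= i0)%N ->
  alive t (flip i0 z) = alive t z.
Proof.
elim: t z => [|t IH] z Hi.
  by rewrite /= /is_opt L_flip.
rewrite /= /is_opt L_flip //; case: eqP => // _.
rewrite (reindex_inj (flip_inj (i0:=i0))); apply: eq_bigr => x _.
have [xz|zx] := leqP (L x) (L z).
  have Hx : ((L x).+1 * l <= i0)%N.
    by apply: leq_trans Hi; rewrite leq_mul2r ltnS xz orbT.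
  by rewrite IH // ea_flip.
rewrite !ea0 ?mulr0 //; rewrite L_flip //.
by rewrite (leL_flip _ (leq_trans zx (L_le_k x)) Hi).
Qed.


Definition idx (j : nat) (i : 'I_l) : 'I_n := insubd (Ordinal n_gt0) (j * l + i)%N.

Lemma idx_bound j (i : 'I_l) : (j < k)%N -> (j * l + i < n)%N.
Proof.
move=> jk; rewrite nkl; apply: (@leq_trans (j.+1 * l)).
  by rewrite mulSnr ltn_add2l ltn_ord.
by rewrite leq_mul2r jk orbT.
Qed.

Lemma val_idx j (i : 'I_l) : (j < k)%N -> val (idx j i) = (j * l + i)%N.
Proof. by move=> jk; rewrite val_insubd idx_bound. Qed.

Lemma idx_inj j : (j < k)%N -> injective (idx j).
Proof.
by move=> jk i i' /(congr1 val); rewrite !val_idx // => /addnI /val_inj.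
Qed.

Lemma idx_ge j (i : 'I_l) : (j < k)%N -> (j * l <= idx j i)%N.
Proof. by move=> jk; rewrite val_idx // leq_addr. Qed.

Lemma idx_lt j (i : 'I_l) : (j < k)%N -> (idx j i < j.+1 * l)%N.
Proof. by move=> jk; rewrite val_idx // mulSnr ltn_add2l ltn_ord. Qed.

Definition sg (b : bool) : R := if b then 1 else -1.

Definition chi (j : nat) (S : {set 'I_l}) (y : bits n) : R :=
  \prod_(i in S) sg (y (idx j i)).

Lemma chi_flip j (S : {set 'I_l}) (y : bits n) (i : 'I_l) : (j < k)%N -> i \in S ->
  chi j S (flip (idx j i) y) = - chi j S y.
Proof.
move=> jk iS; rewrite /chi (bigD1 i) //= [in RHS](bigD1 i) //= ffunE eqxx.
rewrite (eq_bigr (fun i' => sg (y (idx j i')))); last first.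
  by move=> i' /andP[_ ne]; rewrite ffunE (inj_eq (idx_inj jk)) (negbTE ne).
by case: (y (idx j i)) => /=; rewrite !(mulN1r, mul1r, opprK).
Qed.

Lemma chi_ones j (S : {set 'I_l}) (y : bits n) : (j < k)%N -> pi j.+1 y -> chi j S y = 1.
Proof.
move=> jk /forallP H; rewrite /chi big1 // => i _.
by move: (implyP (H (idx j i))); rewrite idx_lt // => /(_ isT) ->.
Qed.

Lemma chi0 j (y : bits n) : chi j set0 y = 1.
Proof. by rewrite /chi big_set0. Qed.

Lemma chi_sum_all j (y : bits n) :
  \sum_(S : {set 'I_l}) chi j S y = \prod_(i : 'I_l) (sg (y (idx j i)) + 1).
Proof.
by rewrite bigA_distr; apply: eq_bigr => S _; rewrite /chi big_mkcond.
Qed.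

Lemma block_zero j (y : bits n) : (j < k)%N -> pi j y -> ~~ pi j.+1 y ->
  exists i : 'I_l, y (idx j i) = false.
Proof.
move=> jk Hj /forallPn [o]; rewrite negb_imply => /andP[olt yo].
have ojl : (j * l <= o)%N.
  rewrite leqNgt; apply/negP => ol; move/forallP: Hj => /(_ o).
  by rewrite ol /= => yo'; rewrite yo' in yo.
have il : (o - j * l < l)%N by rewrite ltn_subLR // -mulSnr.
exists (Ordinal il); have -> : idx j (Ordinal il) = o.
  by apply: val_inj; rewrite val_idx //= subnKC.
exact/negbTE.
Qed.

Lemma chi_sum_ne j (y : bits n) : (j < k)%N -> pi j y -> ~~ pi j.+1 y ->
  \sum_(S : {set 'I_l} | S != set0) chi j S y = -1.
Proof.
move=> jk Hj Hj1; have := chi_sum_all j y; rewrite (bigD1 set0) //= chi0.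
have [i yi] := block_zero jk Hj Hj1.
rewrite (bigD1 i) //= yi /= addNr mul0r => E; lra.
Qed.

Lemma prod_prefix c m : (m <= k)%N ->
  \prod_(o < n) (if (o < m * l)%N then c else 1) = c ^+ (m * l) :> R.
Proof.
move=> mk; rewrite -big_mkcond -big_ord_widen ?prodr_const ?card_ord //.
by rewrite nkl leq_mul2r mk orbT.
Qed.

Lemma E2 q (x : bits n) m (S : {set 'I_l}) : (m < k)%N -> pi m x ->
  \sum_(y : bits n) mut q x y * ((pi m y)%:R * chi m S y) =
  (1 - q) ^+ (m * l) * (1 - 2 * q) ^+ #|S| * chi m S x.
Proof.
move=> mk Hx.
pose B := idx m @: S.
have Bge o : o \in B -> (m * l <= o)%N.
  by case/imsetP => i _ ->; apply: idx_ge.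
have piE y : (pi m y)%:R = \prod_(o < n) (if (o < m * l)%N then (y o)%:R else 1) :> R.
  case Hy: (pi m y).
    rewrite big1 // => o _; case: ifP => // ol.
    by move/forallP: Hy => /(_ o); rewrite ol /= => ->.
  move/negbT: Hy => /forallPn [o]; rewrite negb_imply => /andP[ol yo].
  by rewrite (bigD1 o) //= ol (negbTE yo) mul0r.
have injS : {in S &, injective (idx m)} by move=> i i' _ _; apply: idx_inj.
have chiE y : chi m S y = \prod_(o < n) (if o \in B then sg (y o) else 1).
  by rewrite -big_mkcond big_imset.
rewrite (eq_bigr (fun y => mut q x y * \prod_(o < n) ((if (o < m * l)%N then ((y o)%:R : R) else 1) *
                                  (if o \in B then sg (y o) else 1)))); last first.
  by move=> y _; rewrite piE chiE big_split.
rewrite (E_prod q x (fun o b => (if (o < m * l)%N then (b%:R : R) else 1) *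
                                  (if o \in B then sg b else 1))).
transitivity (\prod_(o < n) ((if (o < m * l)%N then 1 - q else 1) *
                   (if o \in B then (1 - 2 * q) * sg (x o) else 1))).
  apply: eq_bigr => o _.
  case: ifP => ol.
    have -> : o \in B = false by apply/negP => /Bge; rewrite leqNgt ol.
    move/forallP: Hx => /(_ o); rewrite ol /= => ->.
    by rewrite /wt /= !mulr1 mulr0 addr0.
case: ifP => oB; rewrite /wt /sg; case: (x o) => /=; ring.
have HB : \prod_(o < n) (if o \in B then (1 - 2 * q) * sg (x o) else 1) = (1 - 2 * q) ^+ #|S| * chi m S x.
  rewrite -big_mkcond prodrMl (card_imset _ (idx_inj mk)); congr (_ * _); by rewrite big_imset.
rewrite big_split prod_prefix; last exact: ltnW.
rewrite HB; apply: mulrA.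
Qed.


Definition lam m : R := 1 - 2 * p m.
Definition s m : R := (1 - p m) ^+ (m * l).
Definition coef (j : nat) (S : {set 'I_l}) : R := (s j)^-1 / (1 - lam j ^+ #|S|).
Definition g (y : bits n) : R :=
  \sum_(j < k) \sum_(S : {set 'I_l} | S != set0) coef j S * (1 - (pi j y)%:R * chi j S y).
Definition Cst : R := \sum_(j < k) \sum_(S : {set 'I_l} | S != set0) coef j S.
Definition Ex (x : bits n) j S : R :=
  \sum_(y : bits n) mut (p (L x)) x y * ((pi j y)%:R * chi j S y).

Lemma s_gt0 j : (j < k)%N -> 0 < s j.
Proof. by move=> jk; case/andP: (p01 jk) => h1 h2; apply: exprn_gt0; lra. Qed.

Lemma lam_lt1 j d : (j < k)%N -> (0 < d)%N -> lam j ^+ d < 1.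
Proof.
move=> jk d0; apply: ltr_normlW; rewrite normrX expr_lt1 //.
by rewrite ltr_norml /lam; case/andP: (p01 jk) => h1 h2; apply/andP; split; lra.
Qed.

Lemma coef_gt0 j (S : {set 'I_l}) : (j < k)%N -> S != set0 -> 0 < coef j S.
Proof.
move=> jk S0; rewrite /coef; apply: divr_gt0; first by rewrite invr_gt0 s_gt0.
by rewrite subr_gt0 lam_lt1 // card_gt0.
Qed.

Lemma pichi_bound j (S : {set 'I_l}) (y : bits n) :
  -1 <= (pi j y)%:R * chi j S y <= 1.
Proof.
have : `|(pi j y)%:R * chi j S y| <= 1.
  rewrite normrM /chi normr_prod big1; last by move=> i _; case: (y _); rewrite /sg ?normrN normr1.
  by rewrite mulr1; case: (pi j y); rewrite ?normr1 ?normr0.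
by rewrite ler_norml.
Qed.

Lemma g_ge0 y : 0 <= g y.
Proof.
apply: sumr_ge0 => j _; apply: sumr_ge0 => S S0; apply: mulr_ge0.
  exact/ltW/coef_gt0.
by case/andP: (pichi_bound j S y) => h1 h2; lra.
Qed.

Lemma g_le y : g y <= 2 * Cst.
Proof.
rewrite /Cst mulr_sumr; apply: ler_sum => j _; rewrite mulr_sumr; apply: ler_sum => S S0.
have c0 := coef_gt0 (ltn_ord j) S0.
case/andP: (pichi_bound j S y) => h1 h2; nra.
Qed.

Lemma g_opt y : is_opt l y -> g y = 0.
Proof.
rewrite opt_pi => Hk; rewrite /g big1 // => j _; rewrite big1 // => S _.
rewrite (pi_anti _ Hk) ?(ltnW (ltn_ord j)) // chi_ones //; last first.
  exact: pi_anti Hk.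
by rewrite mulr1 subrr mulr0.
Qed.


Lemma drift x : ~~ is_opt l x ->
  \sum_(z : bits n) ea x z * g z =
  g x - 1 - \sum_(j < k | (L x < j)%N) \sum_(S : {set 'I_l} | S != set0) coef j S * Ex x j S.
Proof.
move=> nox.
have mk := nopt_lt nox.
set m := L x in mk *.
have Hm : pi m x by rewrite -leL ?leqnn // ltnW.
have Hm1 : ~~ pi m.+1 x by rewrite -leL // ltnn.
set q := p m.
transitivity (\sum_(y : bits n) mut q x y * g (if (m <= L y)%N then y else x)).
  rewrite /ea_step; under eq_bigr => z _ do rewrite mulr_suml.
  rewrite exchange_big; apply: eq_bigr => y _.
  rewrite (bigD1 (if (m <= L y)%N then y else x)) //= eqxx mulr1 big1 ?addr0 //.
  by move=> z /negbTE; rewrite eq_sym => ->; rewrite mulr0 mul0r.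
transitivity (g x + \sum_(y : bits n) mut q x y * ((pi m y)%:R * (g y - g x))).
  rewrite (eq_bigr (fun y => mut q x y * g x + mut q x y * ((pi m y)%:R * (g y - g x)))); last first.
    move=> y _; rewrite leL; last exact: ltnW.
    by case: (pi m y); rewrite /=; ring.
  by rewrite big_split /= -mulr_suml mut_sum1 mul1r.
pose E0 := \sum_(y : bits n) mut q x y * (pi m y)%:R.
pose Fv j S := \sum_(y : bits n) mut q x y * ((pi m y)%:R * ((pi j y)%:R * chi j S y)).
have E0E : E0 = s m.
  transitivity (\sum_(y : bits n) mut q x y * ((pi m y)%:R * chi m set0 y)).
    by apply: eq_bigr => y _; rewrite chi0 mulr1.
  by rewrite E2 // cards0 expr0 mulr1 chi0 mulr1.
have step3 : \sum_(y : bits n) mut q x y * ((pi m y)%:R * (g y - g x)) =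
  \sum_(j < k) \sum_(S : {set 'I_l} | S != set0)
     coef j S * ((pi j x)%:R * chi j S x * E0 - Fv j S).
  transitivity (\sum_(y : bits n) \sum_(j < k) \sum_(S : {set 'I_l} | S != set0)
     coef j S * ((pi j x)%:R * chi j S x * (mut q x y * (pi m y)%:R) -
                 mut q x y * ((pi m y)%:R * ((pi j y)%:R * chi j S y)))).
    apply: eq_bigr => y _; rewrite /g -sumrB mulr_sumr mulr_sumr.
    apply: eq_bigr => j _; rewrite -sumrB mulr_sumr mulr_sumr.
    by apply: eq_bigr => S _; ring.
  rewrite exchange_big; apply: eq_bigr => j _; rewrite exchange_big.
  by apply: eq_bigr => S _; rewrite -mulr_sumr sumrB -mulr_sumr.
have step4 (j : 'I_k) : \sum_(S : {set 'I_l} | S != set0)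
     coef j S * ((pi j x)%:R * chi j S x * E0 - Fv j S) =
  (if (j == m :> nat) then -1 else 0) -
  (if (m < j)%N then \sum_(S : {set 'I_l} | S != set0) coef j S * Ex x j S else 0).
  have jk := ltn_ord j.
  case: (ltngtP j m) => jm.
  - rewrite subr0 big1 // => S _.
    rewrite (pi_anti (ltnW jm) Hm) (chi_ones S jk (pi_anti jm Hm)).
    suff -> : Fv j S = E0 by rewrite mulr1 mul1r subrr mulr0.
    apply: eq_bigr => y _; case Hy: (pi m y); last by rewrite !mul0r.
    by rewrite (pi_anti (ltnW jm) Hy) (chi_ones S jk (pi_anti jm Hy)) /= !mulr1.
  - rewrite sub0r -sumrN; apply: eq_bigr => S _.
    have -> : pi j x = false.
      by apply/negP => Hj; move: Hm1; rewrite (pi_anti jm Hj).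
    suff -> : Fv j S = Ex x j S by rewrite mul0r mul0r sub0r mulrN.
    apply: eq_bigr => y _; case Hy: (pi j y); last by rewrite !mul0r mulr0.
    by rewrite (pi_anti (ltnW jm) Hy) /= mul1r.
  - have jm' : (j : nat) = m by [].
    rewrite subr0 -(chi_sum_ne (j:=m) mk Hm Hm1); apply: eq_bigr => S S0.
    have -> : Fv j S = s m * lam m ^+ #|S| * chi m S x.
      rewrite -E2 //; apply: eq_bigr => y _; rewrite jm'.
      by case: (pi m y); rewrite ?mul1r ?mul0r.
    rewrite jm' Hm E0E /coef /=.
    have sm0 : s m != 0 by rewrite gt_eqF // s_gt0.
    have lm0 : 1 - lam m ^+ #|S| != 0.
      by rewrite gt_eqF // subr_gt0 lam_lt1 // card_gt0.
    by field; rewrite lm0 sm0.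
apply: (@eq_trans _ _ (g x + \sum_(j < k) \sum_(S : {set 'I_l} | S != set0)
     coef j S * ((pi j x)%:R * chi j S x * E0 - Fv j S))).
  by congr (_ + _); exact: step3.
rewrite (eq_bigr _ (fun j _ => step4 j)) sumrB -big_mkcond /=.
rewrite (bigD1 (Ordinal mk)) //= big1; last first.
  move=> j /andP[/eqP jm ne]; move: ne.
  by rewrite -(inj_eq val_inj) /= jm eqxx.
rewrite [\sum_(j < k | (m < j)%N) _]big_mkcond /=; lra.
Qed.


Lemma sum_flip_cancel (F : bits n -> R) (o : 'I_n) :
  (forall x, F (flip o x) = - F x) -> \sum_(x : bits n) F x = 0.
Proof.
move=> H; have E : \sum_(x : bits n) F x = \sum_(x : bits n) F (flip o x).
  exact: (reindex_inj (flip_inj (i0:=o))).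
move: E; rewrite (eq_bigr _ (fun x _ => H x)) sumrN => E; lra.
Qed.

Lemma Ex_flip (x : bits n) j (S : {set 'I_l}) (i : 'I_l) : (j < k)%N -> i \in S ->
  (L x < j)%N -> Ex (flip (idx j i) x) j S = - Ex x j S.
Proof.
move=> jk iS Lj.
have Ho : ((L x).+1 * l <= idx j i)%N.
  by apply: leq_trans (idx_ge _ jk); rewrite leq_mul2r Lj orbT.
rewrite /Ex (L_flip Ho) (reindex_inj (flip_inj (i0:=idx j i))) -sumrN.
apply: eq_bigr => y _; rewrite mut_flip pi_flip ?idx_ge // chi_flip //.
by rewrite mulrN mulrN.
Qed.

Lemma cancel_future t j (S : {set 'I_l}) : (j < k)%N -> S != set0 ->
  \sum_(x : bits n) alive t x * (if (L x < j)%N then Ex x j S else 0) = 0.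
Proof.
move=> jk /set0Pn [i iS].
apply: (sum_flip_cancel (o := idx j i)) => x.
have jo : (j * l <= idx j i)%N by apply: idx_ge.
rewrite !ltnNge (leL_flip _ (ltnW jk) jo) -!ltnNge.
case: ifP => Lj; last by rewrite !mulr0 oppr0.
have Ho : ((L x).+1 * l <= idx j i)%N.
  by apply: leq_trans jo; rewrite leq_mul2r Lj orbT.
by rewrite alive_flip // Ex_flip // mulrN.
Qed.

Definition Gt t : R := \sum_(x : bits n) alive t x * g x.

Lemma G_step t : Gt t.+1 = Gt t - surv n l p t.
Proof.
rewrite /Gt /surv.
transitivity (\sum_(z : bits n) (\sum_(x : bits n) alive t x * ea x z) * g z).
  apply: eq_bigr => z _ /=; case: ifP => Oz //.
  by rewrite g_opt // !mulr0.
under eq_bigr => z _ do rewrite mulr_suml.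
rewrite exchange_big.
transitivity (\sum_(x : bits n) (alive t x * g x - alive t x -
   \sum_(j < k) \sum_(S : {set 'I_l} | S != set0)
      coef j S * (alive t x * (if (L x < j)%N then Ex x j S else 0)))).
  apply: eq_bigr => x _.
  rewrite (eq_bigr (fun z => alive t x * (ea x z * g z))); last by move=> z _; rewrite mulrA.
  rewrite -mulr_sumr.
  case Ox: (is_opt l x).
    rewrite alive_opt // !mul0r subrr sub0r big1 ?oppr0 //.
    by move=> j _; rewrite big1 // => S _; rewrite mul0r mulr0.
  rewrite drift ?Ox // !mulrBr mulr1; congr (_ - _).
  rewrite big_mkcond mulr_sumr; apply: eq_bigr => j _.
  case: ifP => Lj; last by rewrite mulr0 big1 // => S _; rewrite !mulr0.
  by rewrite mulr_sumr; apply: eq_bigr => S _; ring.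
rewrite !sumrB.
set C := (X in _ - _ - X).
suff -> : C = 0 by rewrite subr0.
rewrite /C exchange_big big1 // => j _.
rewrite exchange_big big1 // => S S0.
by rewrite -mulr_sumr cancel_future // mulr0.
Qed.

Lemma G_ge0 t : 0 <= Gt t.
Proof. by apply: sumr_ge0 => x _; apply: mulr_ge0; [apply: alive_ge0|apply: g_ge0]. Qed.

Lemma G_le t : Gt t <= 2 * Cst * surv n l p t.
Proof.
rewrite /Gt /surv mulr_sumr; apply: ler_sum => x _.
by rewrite mulrC; apply: ler_wpM2r; [apply: alive_ge0|apply: g_le].
Qed.

Lemma G0 : Gt 0 = Cst.
Proof.
rewrite /Gt.
transitivity (\sum_(x : bits n) (2 ^+ n)^-1 * g x).
  by apply: eq_bigr => x _ /=; case: ifP => Ox //; rewrite g_opt // !mulr0.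
rewrite -mulr_sumr.
have -> : \sum_(x : bits n) g x = 2 ^+ n * Cst.
  rewrite /g exchange_big /Cst mulr_sumr; apply: eq_bigr => j _.
  rewrite exchange_big mulr_sumr; apply: eq_bigr => S S0.
  rewrite -mulr_sumr sumrB.
  have [i iS] := set0Pn _ S0.
  have -> : \sum_(x : bits n) (pi j x)%:R * chi j S x = 0.
    apply: (sum_flip_cancel (o := idx j i)) => x.
    by rewrite pi_flip ?idx_ge // chi_flip // mulrN.
  rewrite subr0 sumr_const card_ffun card_bool card_ord.
  by rewrite -natrX mulrC -mulr_natr.
by rewrite mulKf // expf_neq0 // pnatr_eq0.
Qed.

End Comb.

Lemma count_sets (R : realType) (l : nat) (F : nat -> R) :
  \sum_(S : {set 'I_l} | S != set0) F #|S| = \sum_(1 <= i < l.+1) 'C(l, i)%:R * F i.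
Proof.
transitivity (\sum_(S : {set 'I_l}) (if #|S| == 0%N then 0 else F #|S|)).
  by rewrite big_mkcond; apply: eq_bigr => S _; rewrite cards_eq0; case: (S == set0).
rewrite (partition_big (fun S : {set 'I_l} => (inord #|S| : 'I_l.+1)) xpredT) //=.
transitivity (\sum_(i < l.+1) (if (i == 0%N :> nat) then 0 else 'C(l, i)%:R * F i)).
  apply: eq_bigr => i _.
  have cS (S : {set 'I_l}) : (#|S| < l.+1)%N.
    by rewrite ltnS -[X in (_ <= X)%N](card_ord l) max_card.
  rewrite (eq_bigr (fun _ => if (i == 0%N :> nat) then 0 else F i)); last first.
    by move=> S /eqP <-; rewrite inordK.
  case: eqP => _; first by rewrite big1.
  rewrite (eq_bigl (fun S => S \in [set S : {set 'I_l} | #|S| == i])); last first.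
    by move=> S; rewrite !inE -(inj_eq val_inj) /= inordK.
  by rewrite sumr_const card_draws card_ord mulr_natl.
rewrite big_ord_recl /= add0r big_add1 big_mkord.
by apply: eq_bigr => i _.
Qed.

Lemma Cst_formula (R : realType) (n l : nat) (p : nat -> R) :
  Cst n l p = \sum_(m < n %/ l) ((1 - p m) ^+ (m * l))^-1 *
         \sum_(1 <= j < l.+1) 'C(l, j)%:R / (1 - (1 - 2 * p m) ^+ j).
Proof.
rewrite /Cst; apply: eq_bigr => m _; rewrite /coef.
rewrite (eq_bigr (fun S : {set 'I_l} => (s l p m)^-1 * (fun i => (1 - lam p m ^+ i)^-1) #|S|)) //.
rewrite -mulr_sumr (count_sets l (fun i => (1 - lam p m ^+ i)^-1)).
by congr (_ * _); apply: eq_bigr.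
Qed.

Lemma geo_id (R : realType) (q : R) (l k : nat) : 0 < q < 1 -> (0 < l)%N ->
  \sum_(m < k.+1) ((q ^+ (m * l))^-1) = ((q ^+ (k * l))^-1 - q ^+ l) / (1 - q ^+ l).
Proof.
move=> /andP[q0 q1] l0.
set b := q ^+ l; set u := b^-1.
have b0 : b != 0 by rewrite expf_neq0 // gt_eqF.
have b1 : 1 - b != 0 by rewrite gt_eqF // subr_gt0 expr_lt1 // ltW.
have uq : u * b = 1 by rewrite mulVf.
have E m : (q ^+ (m * l))^-1 = u ^+ m by rewrite mulnC exprM exprVn.
rewrite (eq_bigr (fun m : 'I_k.+1 => u ^+ m)); last by move=> m _; rewrite E.
rewrite E.
suff H : (\sum_(m < k.+1) u ^+ m) * (1 - b) = u ^+ k - b by rewrite -H mulfK.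
elim: k => [|k IH]; first by rewrite big_ord1 expr0 mul1r.
rewrite big_ord_recr /= mulrDl IH exprS.
have -> : u * u ^+ k * (1 - b) = u * u ^+ k - u ^+ k.
  by rewrite mulrBr mulr1 -mulrA mulrCA uq mulr1.
ring.
Qed.

From mathcomp Require Import boolp classical_sets topology normedtype.
Import numFieldNormedType.Exports.
Local Open Scope classical_set_scope.
Local Open Scope ring_scope.
Lemma an (R : realType) (G su : nat -> R) :
  (forall N, \sum_(0 <= t < N) su t = G 0%N - G N) -> G @ \oo --> 0 ->
  (\sum_(t <oo) (su t)%:E)%E = (G 0%N)%:E.
Proof.
move=> Hs HG.
have -> : (fun N => \sum_(0 <= t < N) (su t)%:E)%E = EFin \o (fun N => G 0%N - G N).
  by apply/funext => N /=; rewrite sumEFin Hs.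
have cv : (fun N => G 0%N - G N) @ \oo --> G 0%N - 0.
  by apply: cvgB => //; exact: cvg_cst.
rewrite subr0 in cv.
by rewrite EFin_lim ?(cvg_lim _ cv) //; apply/cvg_ex; exists (G 0%N).
Qed.

Lemma decay (R : realType) (G su : nat -> R) (B : R) :
  1 <= B -> (forall t, 0 <= G t) -> (forall t, G t <= B * su t) ->
  (forall t, G t.+1 = G t - su t) -> G @ \oo --> 0.
Proof.
move=> B1 G0 Gle Gs.
set r := 1 - B^-1.
have r0 : 0 <= r by rewrite /r subr_ge0 invf_le1 //; lra.
have Bi : 0 < B^-1 by rewrite invr_gt0; lra.
have r1 : r < 1 by rewrite /r; lra.
have Hb t : G t <= G 0%N * r ^+ t.
  elim: t => [|t IH]; first by rewrite expr0 mulr1.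
  rewrite Gs exprS.
  have : G t / B <= su t.
    by rewrite ler_pdivrMr; [rewrite mulrC|lra].
  have : G t - G t / B = r * G t by rewrite /r; ring.
  move=> E H; apply: (@le_trans _ _ (r * G t)); first by lra.
  by rewrite mulrCA ler_wpM2l.
apply: (squeeze_cvgr (f := fun _ => 0) (h := geometric (G 0%N) r)).
- by apply: nearW => t; rewrite G0 /geometric /= Hb.
- by apply: (cvg_cst (0:R^o)).
- by apply: cvg_geometric; rewrite ger0_norm.
Qed.

Theorem mainTheorem6 (R : realType) (n l : nat) :
  (0 < n)%N -> (0 < l)%N -> (l %| n)%N ->
  (forall p : nat -> R,
    (forall m, (m < n %/ l)%N -> 0 < p m < 1) ->
    expected_runtime n l p =
      (\sum_(m < n %/ l)
         ((1 - p m) ^+ (m * l))^-1 *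
         \sum_(1 <= j < l.+1) 'C(l, j)%:R / (1 - (1 - 2 * p m) ^+ j))%:E)
  /\
  (forall p : R, 0 < p < 1 ->
    expected_runtime n l (fun _ => p) =
      ((((1 - p) ^+ (n - l))^-1 - (1 - p) ^+ l) / (1 - (1 - p) ^+ l) *
         \sum_(1 <= j < l.+1) 'C(l, j)%:R / (1 - (1 - 2 * p) ^+ j))%:E).
Proof.
move=> n0 l0 ldn.
have k0 : (0 < n %/ l)%N by rewrite divn_gt0 // dvdn_leq.
have part1 : forall p : nat -> R, (forall m, (m < n %/ l)%N -> 0 < p m < 1) ->
    expected_runtime n l p = (\sum_(m < n %/ l) ((1 - p m) ^+ (m * l))^-1 *
         \sum_(1 <= j < l.+1) 'C(l, j)%:R / (1 - (1 - 2 * p m) ^+ j))%:E.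
  move=> p p01.
  rewrite -Cst_formula -(G0 n0 ldn p).
  have Cst0 : 0 <= Cst n l p.
    apply: sumr_ge0 => j _; apply: sumr_ge0 => S S0.
    exact/ltW/(coef_gt0 p01 (ltn_ord j) S0).
  have sv0 t : 0 <= surv n l p t.
    by apply: sumr_ge0 => x _; apply: (alive_ge0 p01).
  apply: (an (G := Gt l n0 p)).
  - move=> N; elim: N => [|N IH]; first by rewrite big_geq // subrr.
    rewrite big_nat_recr //= IH (G_step n0 l0 ldn p01); ring.
  - apply: (decay (B := 2 * Cst n l p + 1) (su := surv n l p)).
    + lra.
    + exact: (G_ge0 n0 p01).
    + move=> t; apply: le_trans (G_le n0 p01 t) _.
      by apply: ler_wpM2r => //; lra.
    + exact: (G_step n0 l0 ldn p01).
split; first exact: part1.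
move=> p p01.
rewrite part1; last by move=> m _.
congr EFin.
transitivity ((\sum_(m < n %/ l) ((1 - p) ^+ (m * l))^-1) *
   \sum_(1 <= j < l.+1) 'C(l, j)%:R / (1 - (1 - 2 * p) ^+ j)).
  by rewrite mulr_suml; apply: eq_bigr.
congr (_ * _).
have nk := divnK ldn.
case E: (n %/ l)%N k0 nk => [|k'] // _ nk.
have -> : (n - l)%N = (k' * l)%N by rewrite -nk mulSnr addnK.
apply: geo_id => //.
by case/andP: p01 => h1 h2; apply/andP; split; lra.
Qed.
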